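(* Let $\mathcal N=(\mathcal V,\mathcal R)$ be a non-autocatalytic reaction network on $n$ species, let $\mathbf k\in\mathbb R_{>0}^{\mathcal R}$ be rate constants and $\boldsymbol\tau\in\mathbb R_{\ge 0}^{\mathcal R}$ delay parameters, and let $\mathbf x^*\in\mathbb R^n_{>0}$ be an equilibrium of the delay mass action system $\mathcal N_{\boldsymbol\tau,\mathbf k}$. Let $J_\lambda=J_\lambda(\mathbf x^*,\mathbf k,\boldsymbol\tau)$, $J=J(\mathbf x^*,\mathbf k)$ and $\tilde J=\tilde J(\mathbf x^*,\mathbf k)$ be the matrices defined in the context. Suppose $\det J\neq 0$, $\tilde J_{ii}<0$ for all $i$, and $-\tilde J$ is a $P_0$-matrix. Then every root $\lambda\in\mathbb C$ of the characteristic equation $\det(J_\lambda-\lambda I)=0$ has negative real part.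
   Context: A reaction network $\mathcal N=(\mathcal V,\mathcal R)$ is a finite directed graph whose vertices (complexes) are vectors $\mathbf y\in\mathbb R^n_{\ge 0}$; each edge $\mathbf y\to\mathbf y'$ is a reaction. Species are identified with the standard basis vectors $\mathbf e_1,\dots,\mathbf e_n$. A reaction $\mathbf y\to\mathbf y'$ is autocatalytic if $\mathrm{supp}(\mathbf y)\cap\mathrm{supp}(\mathbf y')\neq\emptyset$ and $y_i'>y_i$ for every $i\in\mathrm{supp}(\mathbf y)\cap\mathrm{supp}(\mathbf y')$; the network is non-autocatalytic if it has no autocatalytic reactions. For $\mathbf x\in\mathbb R^n_{>0}$, write $\mathbf x^{\mathbf y}=\prod_i x_i^{y_i}$. Given rate constants $k_{\mathbf y\to\mathbf y'}>0$ and delays $\tau_{\mathbf y\to\mathbf y'}\ge 0$ (one per reaction), the delay mass action system $\mathcal N_{\boldsymbol\tau,\mathbf k}$ is $\dot{\mathbf x}(t)=\sum_{\mathbf y\to\mathbf y'\in\mathcal R}k_{\mathbf y\to\mathbf y'}[\mathbf x(t-\tau_{\mathbf y\to\mathbf y'})]^{\mathbf y}\mathbf y'-\sum_{\mathbf y\to\mathbf y'\in\mathcal R}k_{\mathbf y\to\mathbf y'}[\mathbf x(t)]^{\mathbf y}\mathbf y$; an equilibrium is a constant solution $\mathbf x^*\in\mathbb R^n_{>0}$. For $\mathbf x\in\mathbb R^n_{>0}$ and $\lambda\in\mathbb C$, define $n\times n$ matrices with entries (row $j$, column $i$): $(J_\lambda)_{ji}=\sum_{\mathbf y\to\mathbf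 y'\in\mathcal R}k_{\mathbf y\to\mathbf y'}\mathbf x^{\mathbf y}\frac{y_i}{x_i}\big(y'_j e^{-\lambda\tau_{\mathbf y\to\mathbf y'}}-y_j\big)$; $J_{ji}=\sum_{\mathbf y\to\mathbf y'}k_{\mathbf y\to\mathbf y'}\mathbf x^{\mathbf y}\frac{y_i}{x_i}(y'_j-y_j)$ (the Jacobian of the delay-free mass action system); and the modified Jacobian $\tilde J_{ji}=\sum_{\mathbf y\to\mathbf y'}k_{\mathbf y\to\mathbf y'}\mathbf x^{\mathbf y}\frac{y_i}{x_i}(y'_j+y_j)$ for $j\neq i$, and $\tilde J_{ii}=\sum_{\mathbf y\to\mathbf y'}k_{\mathbf y\to\mathbf y'}\mathbf x^{\mathbf y}\frac{y_i}{x_i}(y'_i-y_i)$. A real square matrix is a $P_0$-matrix if all its principal minors are non-negative. *)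

(* Defs.v *)
From HB Require Import structures.
From mathcomp Require Import all_boot all_order all_algebra.
From mathcomp Require Import all_classical all_reals all_analysis.
From mathcomp.real_closed Require Import complex.
Set Implicit Arguments. Unset Strict Implicit. Unset Printing Implicit Defensive.
Import Order.TTheory GRing.Theory Num.Theory.
Local Open Scope ring_scope.
Local Open Scope complex_scope.

Section ReactionNetworks.
Variables (R : realType) (n m : nat).

(* A reaction network on n species with m reactions: reaction r is
   y r -> y' r, complexes being vectors in R^n_{>=0}. *)
Definition is_reaction_network (y y' : 'I_m -> 'I_n -> R) : Prop :=
  (forall r i, 0 <= y r i) /\ (forall r i, 0 <= y' r i) /\
  (forall r, exists i, y r i != y' r i) /\
  (forall r s, y r = y s -> y' r = y' s -> r = s).

Definition autocatalytic (c c' : 'I_n -> R) : Prop :=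
  (exists i, c i != 0 /\ c' i != 0) /\
  (forall i, c i != 0 -> c' i != 0 -> c i < c' i).

Definition non_autocatalytic (y y' : 'I_m -> 'I_n -> R) : Prop :=
  forall r, ~ autocatalytic (y r) (y' r).

Definition mono (x c : 'I_n -> R) : R := \prod_(i < n) (x i `^ c i).

(* constant positive solution of the delay mass action system:
   x(t) = x for all t, i.e. the right-hand side vanishes at x *)
Definition is_equilibrium (y y' : 'I_m -> 'I_n -> R) (k : 'I_m -> R)
  (x : 'I_n -> R) : Prop :=
  (forall i, 0 < x i) /\
  (forall j, \sum_(r < m) k r * mono x (y r) * y' r j
             - \sum_(r < m) k r * mono x (y r) * y r j = 0).

Definition cexp (z : R[i]) : R[i] :=
  (expR (complex.Re z))%:C * (cos (complex.Im z) +i* sin (complex.Im z)).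

Definition Jlam (y y' : 'I_m -> 'I_n -> R) (k tau : 'I_m -> R)
  (x : 'I_n -> R) (lam : R[i]) : 'M[R[i]]_n :=
  \matrix_(j, i) \sum_(r < m)
     ((k r * mono x (y r) * (y r i / x i))%:C *
      ((y' r j)%:C * cexp (- lam * (tau r)%:C) - (y r j)%:C)).

Definition Jac (y y' : 'I_m -> 'I_n -> R) (k : 'I_m -> R) (x : 'I_n -> R)
  : 'M[R]_n :=
  \matrix_(j, i) \sum_(r < m) k r * mono x (y r) * (y r i / x i) * (y' r j - y r j).

Definition Jtilde (y y' : 'I_m -> 'I_n -> R) (k : 'I_m -> R) (x : 'I_n -> R)
  : 'M[R]_n :=
  \matrix_(j, i) (if j == i then
       \sum_(r < m) k r * mono x (y r) * (y r i / x i) * (y' r j - y r j)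
     else
       \sum_(r < m) k r * mono x (y r) * (y r i / x i) * (y' r j + y r j)).

End ReactionNetworks.

Definition P0_matrix (R : realFieldType) (n : nat) (A : 'M[R]_n) : Prop :=
  forall S : {set 'I_n},
    0 <= \det (mxsub (@enum_val _ (mem S)) (@enum_val _ (mem S)) A).

(* Main.v *)
Require Import Defs.
From HB Require Import structures.
From mathcomp Require Import all_boot all_order all_algebra.
From mathcomp Require Import all_classical all_reals all_analysis.
From mathcomp.real_closed Require Import complex.
From mathcomp Require fingroup perm.
From mathcomp Require Import lra ring.
Import Order.TTheory GRing.Theory Num.Theory.
Local Open Scope ring_scope.

Local Notation nc := (@Normc.normc _).

Lemma split_l m n (x : 'I_m) : fintype.split (lshift n x) = inl x.
Proof. exact: (unsplitK (inl x)). Qed.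
Lemma split_r m n (x : 'I_n) : fintype.split (rshift m x) = inr x.
Proof. exact: (unsplitK (inr x)). Qed.

Section Blocks.
Variable F : fieldType.

Lemma det_schur n (a : F) (r : 'M[F]_(1,n)) (s : 'M[F]_(n,1)) (d : 'M[F]_n) :
  a != 0 -> \det (block_mx a%:M r s d) = a * \det (d - a^-1 *: (s *m r)).
Proof.
move=> a0.
have -> : block_mx a%:M r s d =
  block_mx 1%:M 0 (a^-1 *: s) 1%:M *m block_mx a%:M r 0 (d - a^-1 *: (s *m r)).
  rewrite mulmx_block; congr block_mx.
  - by rewrite mul1mx mul0mx addr0.
  - by rewrite mul1mx mul0mx addr0.
  - by rewrite mulmx0 addr0 mul_mx_scalar scalerA mulfV // scale1r.
  - by rewrite mul1mx -scalemxAl addrC subrK.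
by rewrite det_mulmx det_lblock det_ublock !det1 det_scalar1 !mul1r.
Qed.

Lemma det_block_affine n (a b : F) (r : 'M[F]_(1,n)) (s : 'M[F]_(n,1)) (d : 'M[F]_n) :
  \det (block_mx a%:M r s d) = 1 * \det (block_mx b%:M r s d) + (a - b) * \det d.
Proof.
have -> : \det d = \det (block_mx 1%:M 0 s d) by rewrite det_lblock det1 mul1r.
apply: (determinant_multilinear (i0 := lshift n 0)).
- apply/matrixP => i j; rewrite !mxE.
  rewrite -(splitK j); case: (fintype.split j) => j' /=.
  + rewrite !(mxE, split_l, split_r) (ord1 j') !eqxx /=.
    by rewrite mul1r mulr1 addrC subrK.
  + by rewrite !(mxE, split_l, split_r) mul1r mulr0 addr0.
- apply/matrixP => i j; rewrite !mxE.
  have -> : lift (lshift n 0) i = rshift 1 i by apply/val_inj.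
  rewrite -(splitK j); case: (fintype.split j) => j' /=;
  by rewrite !(mxE, split_l, split_r).
- apply/matrixP => i j; rewrite !mxE.
  have -> : lift (lshift n 0) i = rshift 1 i by apply/val_inj.
  rewrite -(splitK j); case: (fintype.split j) => j' /=;
  by rewrite !(mxE, split_l, split_r).
Qed.

End Blocks.


Lemma schurE (F : fieldType) n (A : 'M[F]_(1+n)) a i j :
  (drsubmx A - a *: (dlsubmx A *m ursubmx A)) i j =
  A (rshift 1 i) (rshift 1 j) - a * (A (rshift 1 i) (lshift n 0) * A (lshift n 0) (rshift 1 j)).
Proof. by rewrite !mxE big_ord1 !mxE. Qed.

Lemma rs_neq_o n (i : 'I_n) : rshift 1 i != lshift n (0 : 'I_1).
Proof. by apply/eqP => /(congr1 val). Qed.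

Lemma key (R : rcfType) n : forall (M : 'M[R]_n) (B : 'M[R[i]]_n),
 (forall i j, i != j -> M i j <= 0) ->
 (forall i j, i != j -> nc (B i j) <= - M i j) ->
 (forall i, M i i < nc (B i i)) ->
 (forall k (f : 'I_k -> 'I_n), 0 <= \det (mxsub f f M)) ->
 \det B != 0.
Proof.
elim: n => [|n IH] M B HZ Hoff Hdiag HP.
  by rewrite det_mx00 oner_neq0.
pose M1 : 'M[R]_(1 + n) := M.
pose B1 : 'M[R[i]]_(1 + n) := B.
pose o : 'I_(1+n) := lshift n 0.
have HM0 : 0 <= M o o.
  by have := HP 1%N (fun _ => o); rewrite det_mx11 mxE.
set c := nc (B o o).
have Hc : 0 < c by apply: le_lt_trans HM0 (Hdiag o).
have HB0 : B o o != 0.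
  by apply/eqP => E; move: Hc; rewrite /c E Normc.normc0 ltxx.
have EB : B1 = block_mx (B o o)%:M (ursubmx B1) (dlsubmx B1) (drsubmx B1).
  rewrite -{1}[B1]submxK; congr block_mx; apply/matrixP => i j.
  by rewrite (ord1 i) (ord1 j) !mxE.
change (\det B1 != 0); rewrite EB det_schur //; apply: mulf_neq0 => //.
have Hnc0 : forall z : R[i], 0 <= nc z.
  by case=> a b; rewrite /Normc.normc sqrtr_ge0.
have Hic : 0 < c^-1 by rewrite invr_gt0.
apply: (IH (drsubmx M1 - c^-1 *: (dlsubmx M1 *m ursubmx M1))).
- move=> i j ij; rewrite schurE -/o.
  have ij' : rshift 1 i != rshift 1 j :> 'I_(1+n) by rewrite (inj_eq (@rshift_inj 1 n)).
  have h1 := HZ _ _ ij'.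
  have h2 : M (rshift 1 i) o <= 0 by apply: HZ; exact: rs_neq_o.
  have h3 : M o (rshift 1 j) <= 0 by apply: HZ; rewrite eq_sym rs_neq_o.
  have h4 : 0 <= c^-1 * (M (rshift 1 i) o * M o (rshift 1 j)).
    by apply: mulr_ge0; [exact: ltW | exact: mulr_le0].
  change (M1 (rshift 1 i) (rshift 1 j) - c^-1 * (M1 (rshift 1 i) o * M1 o (rshift 1 j)) <= 0).
  rewrite /M1; lra.
- move=> i j ij; rewrite !schurE -/o /M1 /B1 -/c.
  have ij' : rshift 1 i != rshift 1 j :> 'I_(1+n) by rewrite (inj_eq (@rshift_inj 1 n)).
  have hP : nc (B (rshift 1 i) o) <= - M (rshift 1 i) o by apply: Hoff; exact: rs_neq_o.
  have hQ : nc (B o (rshift 1 j)) <= - M o (rshift 1 j).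
    by apply: Hoff; rewrite eq_sym; exact: rs_neq_o.
  have hPQ : nc (B (rshift 1 i) o) * nc (B o (rshift 1 j)) <=
             M (rshift 1 i) o * M o (rshift 1 j).
    by rewrite -[X in _ <= X]mulrNN; apply: ler_pM => //; apply: Hnc0.
  have h4 := ler_wpM2l (ltW Hic) hPQ.
  have h5 := Hoff _ _ ij'.
  apply: le_trans (le_normcD _ _) _.
  rewrite normcN !Normc.normcM Normc.normcV -/c.
  lra.
- move=> i; rewrite !schurE -/o /M1 /B1 -/c.
  have hP : nc (B (rshift 1 i) o) <= - M (rshift 1 i) o by apply: Hoff; exact: rs_neq_o.
  have hQ : nc (B o (rshift 1 i)) <= - M o (rshift 1 i).
    by apply: Hoff; rewrite eq_sym; exact: rs_neq_o.
  have hPQ : nc (B (rshift 1 i) o) * nc (B o (rshift 1 i)) <=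
             M (rshift 1 i) o * M o (rshift 1 i).
    by rewrite -[X in _ <= X]mulrNN; apply: ler_pM => //; apply: Hnc0.
  have h4 := ler_wpM2l (ltW Hic) hPQ.
  have h5 := Hdiag (rshift 1 i).
  set t := (B o o)^-1 * _.
  have h6 : nc (B (rshift 1 i) (rshift 1 i)) <= nc (B (rshift 1 i) (rshift 1 i) - t) + nc t.
    by rewrite -{1}(subrK t (B (rshift 1 i) (rshift 1 i))); apply: le_normcD.
  move: h6; rewrite /t Normc.normcM Normc.normcV Normc.normcM -/c.
  lra.
- move=> k f.
  have Hc0 : c != 0 by rewrite gt_eqF.
  have E1 : mxsub f f (drsubmx M1 - c^-1 *: (dlsubmx M1 *m ursubmx M1)) =
     mxsub f f (drsubmx M1) - c^-1 *: (rowsub f (dlsubmx M1) *m colsub f (ursubmx M1)).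
    by apply/matrixP => i j; rewrite !mxE !big_ord1 !mxE.
  rewrite E1.
  have E2 := @det_schur _ _ c (colsub f (ursubmx M1)) (rowsub f (dlsubmx M1)) (mxsub f f (drsubmx M1)) Hc0.
  rewrite (@det_block_affine _ _ _ (M o o)) in E2.
  pose g := fun i : 'I_(1 + k) => match fintype.split i with inl _ => o | inr j => rshift 1 (f j) end.
  have E3 : block_mx (M o o)%:M (colsub f (ursubmx M1)) (rowsub f (dlsubmx M1))
              (mxsub f f (drsubmx M1)) = mxsub g g M1.
    apply/matrixP => i j; rewrite -(splitK i) -(splitK j).
    case: (fintype.split i) => i'; case: (fintype.split j) => j';
      rewrite !(mxE, split_l, split_r) /g /= ?split_l ?split_r //.
    - by rewrite (ord1 i') (ord1 j') eqxx /= mulr1n.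
    - by rewrite (ord1 i').
    - by rewrite (ord1 j').
  have E4 : mxsub f f (drsubmx M1) = mxsub (@rshift 1 n \o f) (@rshift 1 n \o f) M.
    by apply/matrixP => i0 j0; rewrite !mxE.
  rewrite E3 in E2.
  set X := \det (_ - _) in E2 *.
  rewrite E4 in E2.
  have -> : X = c^-1 * (c * X) by rewrite mulrA mulVf // mul1r.
  rewrite -E2; apply: mulr_ge0; first exact: ltW.
  apply: addr_ge0; first by rewrite mul1r; apply: HP.
  apply: mulr_ge0; last exact: HP.
  by rewrite subr_ge0; apply: ltW; apply: Hdiag.
Qed.

Lemma det_mxsub_inj (R : comRingType) k m (p : 'I_k -> 'I_m) (X : 'M[R]_m) :
  injective p -> k = m -> \det (mxsub p p X) = \det X.
Proof.
move=> inj E; subst m.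
pose s := perm.perm inj.
have -> : mxsub p p X = row_perm s (col_perm s X).
  by apply/matrixP => i j; rewrite !mxE !perm.permE.
rewrite row_permE col_permE !det_mulmx !det_perm perm.odd_permV.
by rewrite mulrC -mulrA -signr_addb addbb expr0 mulr1.
Qed.

Lemma P0_all (R : realFieldType) n (A : 'M[R]_n) :
 (forall S : {set 'I_n}, 0 <= \det (mxsub (@enum_val _ (mem S)) (@enum_val _ (mem S)) A)) ->
 forall k (f : 'I_k -> 'I_n), 0 <= \det (mxsub f f A).
Proof.
move=> HP k f.
have [inj | ninj] := boolP (injectiveb f); last first.
  move/injectivePn: ninj => [x [y xy fxy]].
  by rewrite (determinant_alternate xy) // => j; rewrite !mxE fxy.
move/injectiveP: inj => inj.
pose S := f @: [set: 'I_k].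
have Hx : forall i, f i \in S := fun i => imset_f f (finset.in_setT i).
pose p := fun i => enum_rank_in (Hx i) (f i).
have Ep : forall i, enum_val (p i) = f i := fun i => enum_rankK_in (Hx i) (Hx i).
have -> : mxsub f f A = mxsub p p (mxsub enum_val enum_val A).
  by apply/matrixP => i j; rewrite !mxE !Ep.
rewrite det_mxsub_inj; first exact: HP.
  by move=> i j /(congr1 enum_val); rewrite !Ep; apply: inj.
by rewrite finset.card_imset // finset.cardsT card_ord.
Qed.



Set Implicit Arguments. Unset Strict Implicit.
Section H.
Local Open Scope complex_scope.
Variable R : realType.
Implicit Types (z w : R[i]) (a b : R).

Lemma nc_ge0 z : 0 <= nc z.
Proof. by case: z => a b; rewrite /Normc.normc sqrtr_ge0. Qed.

Lemma nc_real a : nc (a%:C) = `|a|.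
Proof. by rewrite /Normc.normc /= expr0n /= addr0 sqrtr_sqr. Qed.

Lemma nc_sum m (F : 'I_m -> R[i]) : nc (\sum_(r < m) F r) <= \sum_(r < m) nc (F r).
Proof.
apply: (@big_ind2 _ _ (fun (a : R[i]) (b : R) => nc a <= b)).
- by rewrite Normc.normc0.
- by move=> x1 x2 y1 y2 h1 h2; apply: le_trans (le_normcD _ _) _; apply: lerD.
- by [].
Qed.

Lemma ReD z w : complex.Re (z + w) = complex.Re z + complex.Re w.
Proof. by case: z; case: w. Qed.
Lemma ImD z w : complex.Im (z + w) = complex.Im z + complex.Im w.
Proof. by case: z; case: w. Qed.
Lemma ReB z w : complex.Re (z - w) = complex.Re z - complex.Re w.
Proof. by case: z; case: w. Qed.
Lemma ImB z w : complex.Im (z - w) = complex.Im z - complex.Im w.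
Proof. by case: z; case: w. Qed.
Lemma ReMC a z : complex.Re (a%:C * z) = a * complex.Re z.
Proof. by case: z => p q; rewrite /= mul0r subr0. Qed.
Lemma ImMC a z : complex.Im (a%:C * z) = a * complex.Im z.
Proof. by case: z => p q; rewrite /= mul0r addr0. Qed.
Lemma Re_sum m (F : 'I_m -> R[i]) : complex.Re (\sum_(r < m) F r) = \sum_(r < m) complex.Re (F r).
Proof. exact: (big_morph _ ReD). Qed.
Lemma Im_sum m (F : 'I_m -> R[i]) : complex.Im (\sum_(r < m) F r) = \sum_(r < m) complex.Im (F r).
Proof. exact: (big_morph _ ImD). Qed.

Lemma Re_cexp z : complex.Re (cexp z) = expR (complex.Re z) * cos (complex.Im z).
Proof. by rewrite /cexp ReMC. Qed.
Lemma Im_cexp z : complex.Im (cexp z) = expR (complex.Re z) * sin (complex.Im z).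
Proof. by rewrite /cexp ImMC. Qed.
Lemma nc_cexp z : nc (cexp z) = expR (complex.Re z).
Proof.
rewrite /cexp Normc.normcM nc_real ger0_norm ?expR_ge0 //.
by rewrite /Normc.normc /= cos2sin2 subrK sqrtr1 mulr1.
Qed.

Lemma Re_lamt z t : complex.Re (- z * t%:C) = - (complex.Re z * t).
Proof. by case: z => p q; rewrite /= mulr0 subr0 mulNr. Qed.

Lemma nc_ge_Re z : complex.Re z <= nc z.
Proof.
case: z => a b; rewrite /Normc.normc /=.
apply: le_trans (ler_norm a) _.
rewrite -sqrtr_sqr; apply: ler_wsqrtr; rewrite lerDl; exact: sqr_ge0.
Qed.

Lemma nc_gt z D : D <= complex.Re z -> (D < complex.Re z \/ complex.Im z != 0) -> D < nc z.
Proof.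
move=> h [h1|h1]; first exact: lt_le_trans h1 (nc_ge_Re _).
apply: le_lt_trans h _; move: h1; case: z => a b /= b0.
apply: le_lt_trans (ler_norm a) _.
have hb : 0 < b ^+ 2 by rewrite exprn_even_gt0.
have ha := sqr_ge0 a.
rewrite /Normc.normc -sqrtr_sqr ltr_sqrt; last by lra.
by lra.
Qed.

End H.
Unset Implicit Arguments. Set Strict Implicit.


Lemma cexp0 (R : realType) : cexp (0 : R[i]) = 1.
Proof.
rewrite /cexp /= expR0 cos0 sin0; apply/eqP; rewrite eq_complex /=.
by rewrite !mul1r !mul0r subr0 addr0 !eqxx.
Qed.

Theorem theorem1 (R : realType) (n m : nat)
  (y y' : 'I_m -> 'I_n -> R) (k tau : 'I_m -> R) (x : 'I_n -> R) :
  is_reaction_network y y' ->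
  non_autocatalytic y y' ->
  (forall r, 0 < k r) ->
  (forall r, 0 <= tau r) ->
  is_equilibrium y y' k x ->
  \det (Jac y y' k x) != 0 ->
  (forall i, Jtilde y y' k x i i < 0) ->
  P0_matrix (- Jtilde y y' k x) ->
  forall lam : R[i], \det (Jlam y y' k tau x lam - lam%:M) = 0 ->
    complex.Re lam < 0.
Proof.
move=> [Hy [Hy' _]] _ Hk Htau [Hx _] HJ _ HP lam Hdet.
rewrite ltNge; apply/negP => Hre.
pose cr r i := k r * mono x (y r) * (y r i / x i).
have Hcr : forall r i, 0 <= cr r i.
  move=> r i; apply: mulr_ge0; last by apply: divr_ge0 => //; exact: ltW.
  apply: mulr_ge0; first exact: ltW.
  rewrite /mono; apply: prodr_ge0 => j _; exact: powR_ge0.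
have [lam0|lam0] := eqVneq lam 0.
  move: Hdet; rewrite lam0.
  have -> : Jlam y y' k tau x 0 - 0%:M = map_mx (real_complex R) (Jac y y' k x).
    apply/matrixP => i j; rewrite !mxE mul0rn subr0 rmorph_sum; apply: eq_bigr => r _.
    by rewrite mulNr mul0r oppr0 cexp0 mulr1 -rmorphB -rmorphM.
  rewrite det_map_mx => /(congr1 (@complex.Re R)) /= E.
  by move: HJ; rewrite E eqxx.
pose e r : R[i] := cexp (- lam * (tau r)%:C%C).
have He1 : forall r, nc (e r) <= 1.
  move=> r; rewrite /e nc_cexp Re_lamt expR_le1 oppr_le0; exact: mulr_ge0.
have HeRe : forall r, complex.Re (e r) <= 1.
  move=> r; exact: le_trans (nc_ge_Re _) (He1 r).
move: Hdet; apply/eqP.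
apply: (@key _ _ (- Jtilde y y' k x)).
- move=> i j ij; rewrite !mxE (negPf ij) oppr_le0; apply: sumr_ge0 => r _.
  by apply: mulr_ge0; [exact: Hcr | apply: addr_ge0].
- move=> i j ij; rewrite !mxE (negPf ij) mulr0n subr0 opprK.
  apply: le_trans (nc_sum _) _; apply: ler_sum => r _.
  rewrite Normc.normcM nc_real ger0_norm; last exact: Hcr r j.
  apply: ler_wpM2l; first exact: Hcr r j.
  apply: le_trans (le_normcD _ _) _; rewrite normcN Normc.normcM !nc_real !ger0_norm //.
  have := He1 r; have := Hy' r i; rewrite /e; nra.
- move=> i; rewrite !mxE eqxx mulr1n -normcN opprB.
  set u := (X in nc (_ - X)).
  have hReu : complex.Re u = \sum_r cr r i * (y' r i - y r i)
                 - \sum_r cr r i * y' r i * (1 - complex.Re (e r)).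
    rewrite /u Re_sum -sumrB; apply: eq_bigr => r _.
    rewrite ReMC ReB ReMC -/(e r) /cr /=; ring.
  set S := \sum_r cr r i * y' r i * (1 - complex.Re (e r)) in hReu.
  set D := \sum_r cr r i * (y' r i - y r i) in hReu.
  have Hnn : forall r : 'I_m, true -> 0 <= cr r i * y' r i * (1 - complex.Re (e r)).
    move=> r _; apply: mulr_ge0; first by apply: mulr_ge0; [exact: Hcr|exact: Hy'].
    by rewrite subr_ge0; exact: HeRe.
  have hS : 0 <= S by apply: sumr_ge0.
  rewrite -/D.
  apply: nc_gt; rewrite ReB hReu; first by lra.
  have [hpos|hnpos] := ltrP 0 (complex.Re lam + S); first by left; lra.
  right.
  have Hre0 : complex.Re lam = 0 by lra.
  have S0 : S = 0 by lra.
  have Hterm := psumr_eq0P Hnn S0.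
  have hImu : complex.Im u = 0.
    rewrite /u Im_sum big1 // => r _.
    set th := complex.Im (- lam * (tau r)%:C%C).
    have hRe_e : complex.Re (e r) = cos th.
      by rewrite /e Re_cexp Re_lamt Hre0 mul0r oppr0 expR0 mul1r.
    have hIm_e : complex.Im (e r) = sin th.
      by rewrite /e Im_cexp Re_lamt Hre0 mul0r oppr0 expR0 mul1r.
    rewrite ImMC ImB ImMC -/(e r) hIm_e (_ : complex.Im (y r i)%:C%C = 0) //.
    have := Hterm r isT; rewrite hRe_e => /eqP; rewrite mulf_eq0 => /orP [/eqP h|].
      by rewrite /cr in h; rewrite subr0 mulrA h mul0r.
    rewrite subr_eq0 => /eqP cth.
    have : sin th ^+ 2 = 0 by rewrite sin2cos2 -cth expr1n subrr.
    by move/eqP; rewrite sqrf_eq0 => /eqP ->; rewrite mulr0 subr0 mulr0.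
  rewrite ImB hImu subr0.
  move: lam0 Hre0; case: (lam) => a b /= ne a0.
  apply: contra ne => /eqP b0; rewrite a0 b0.
  by rewrite eq_complex /= !eqxx.
- exact: P0_all HP.
Qed.
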